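(* Let $b>0$ and let $f:(0,b)\to\mathbb{R}$ be real analytic and not identically zero. Let $\mathcal I=\{x\in(0,b):f(x)=0\}$. Assume that: (1) as $x\to b$ we have $\kappa(f,x)\to\infty$, and for every sequence $x_j\in(0,b)$ with $x_j\to0$ and $\mathrm{dist}(x_j,\mathcal I)\to0$ we have $\kappa(f,x_j)\to\infty$; (2) both as $x\to0$ and as $x\to b$ we have $\limsup|H(f,x)|\leq C$ for some constant $C>0$, where $H(f,x)=\frac{x^2f(x)f''(x)}{f(x)^2+x^2f'(x)^2}$. The part of this hypothesis concerning $x\to0$ (resp. $x\to b$) is automatically satisfied if $f$ admits an analytic extension to $(-\epsilon,b)$ (resp. $(0,b+\epsilon)$) for some $\epsilon>0$. Then $f$ is amenable.
   Context: Relative distance on $\mathbb{R}$: $\mathrm{dist}(x,y)=0$ if $x=y=0$, $\mathrm{dist}(x,y)=|\log(y/x)|$ if $xy>0$, and $\mathrm{dist}(x,y)=\infty$ otherwise; for a set $S$, $\mathrm{dist}(x,S)=\inf_{s\in S}\mathrm{dist}(x,s)$. For a real analytic function $f$ on an open set $\Omega\subseteq\mathbb{R}$, not identically zero, the condition number is $\kappa(f,x)=0$ if $x=0$, $\kappa(f,x)=\infty$ if $x\neq0$ and $f(x)=0$, and $\kappa(f,x)=|x|\,|f'(x)|/|f(x)|$ otherwise; set $\mu(f,x)=1+\kappa(f,x)$. The function $f:\Omega\to\mathbb{R}$ is called amenable if there is a constant $C>0$ such that for every $x\in\Omega$ with $\kappa(f,x)<\infty$, the set $B_x=\{y\in\mathbb{R}:\mathrm{dist}(y,x)<1/(C\mu(f,x))\}$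 is contained in $\Omega$, and $\mu(f,y)\leq C\mu(f,x)$ for all $y\in B_x$. *)

(* Defs.v *)
From Stdlib Require Import Reals Lra.
From Coquelicot Require Import Coquelicot.
Open Scope R_scope.

Definition real_analytic_on (a b : R) (f : R -> R) : Prop :=
  forall x0, a < x0 < b ->
    exists r, 0 < r /\ exists c : nat -> R,
      forall x, a < x < b -> Rabs (x - x0) < r -> is_pseries c (x - x0) (f x).

Definition reldist (x y : R) : Rbar :=
  if Req_EM_T x 0 then (if Req_EM_T y 0 then Finite 0 else p_infty)
  else if Rlt_dec 0 (x * y) then Finite (Rabs (ln (y / x)))
  else p_infty.

Definition reldist_set (x : R) (S : R -> Prop) : Rbar :=
  Glb_Rbar (fun d => exists s, S s /\ reldist x s = Finite d).

Definition kappa (f : R -> R) (x : R) : Rbar :=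
  if Req_EM_T x 0 then Finite 0
  else if Req_EM_T (f x) 0 then p_infty
  else Finite (Rabs x * Rabs (Derive f x) / Rabs (f x)).

Definition mu (f : R -> R) (x : R) : Rbar := Rbar_plus (Finite 1) (kappa f x).

Definition Hf (f : R -> R) (x : R) : R :=
  x ^ 2 * f x * Derive_n f 2 x / (f x ^ 2 + x ^ 2 * (Derive f x) ^ 2).

Definition amenable_on_interval (b : R) (f : R -> R) : Prop :=
  exists C, 0 < C /\
    forall x k, 0 < x < b -> kappa f x = Finite k ->
      let m := 1 + k in
      (forall y, Rbar_lt (reldist y x) (Finite (1 / (C * m))) -> 0 < y < b) /\
      (forall y, Rbar_lt (reldist y x) (Finite (1 / (C * m))) ->
                 Rbar_le (mu f y) (Finite (C * m))).

(* Main.v *)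
Require Import Defs.
From Stdlib Require Import Reals Lra Lia Classical.
From Coquelicot Require Import Coquelicot.
Open Scope R_scope.



Lemma deriv_cont f x l : is_derive f x l -> continuity_pt f x.
Proof. intro H. apply is_derive_Reals in H. apply derivable_continuous_pt. exists l. exact H. Qed.

Lemma cont_eps g x0 : continuity_pt g x0 -> forall e, 0<e -> exists d, 0<d /\
  forall x, Rabs (x - x0) < d -> Rabs (g x - g x0) < e.
Proof.
  intros H e He. destruct (H e He) as [d [Hd H']]. exists d; split; auto.
  intros x Hx. destruct (Req_dec x x0) as [->|Hne].
  - rewrite Rminus_diag, Rabs_R0; auto.
  - apply H'. split. split; [exact I| auto]. exact Hx.
Qed.

Lemma nearest_zero_left (F : R -> R) (a x : R) :
  a < x -> F a = 0 -> F x <> 0 ->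
  (forall s, a <= s <= x -> continuity_pt F s) ->
  exists z, a <= z < x /\ F z = 0 /\ forall s, z < s <= x -> F s <> 0.
Proof.
  intros Hax Fa Fx Hc.
  set (E := fun s => a <= s <= x /\ F s = 0).
  assert (HB : bound E) by (exists x; intros s [Hs _]; lra).
  assert (HE : exists s, E s) by (exists a; split; [lra|auto]).
  destruct (completeness E HB HE) as [z [Hub Hlub]].
  assert (az : a <= z) by (apply Hub; split; [lra|auto]).
  assert (zx : z <= x) by (apply Hlub; intros s [Hs _]; lra).
  assert (Fz : F z = 0).
  { destruct (Req_dec (F z) 0) as [|Hne]; auto. exfalso.
    destruct (cont_eps F z (Hc z (conj az zx)) (Rabs (F z)) (Rabs_pos_lt _ Hne)) as [d [Hd Hd']].
    assert (Hb2 : is_upper_bound E (z - d)).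
    { intros s [Hs Fs]. destruct (Rle_dec s (z - d)) as [|Hn]; auto. exfalso.
      assert (s <= z) by (apply Hub; split; auto).
      specialize (Hd' s ltac:(rewrite Rabs_left1; lra)). rewrite Fs in Hd'.
      rewrite Rminus_0_l, Rabs_Ropp in Hd'. lra. }
    specialize (Hlub _ Hb2). lra. }
  assert (zx' : z < x) by (destruct zx as [|e]; auto; subst; congruence).
  exists z; split; [lra|split; auto].
  intros s Hs Fs. assert (s <= z) by (apply Hub; split; [lra|auto]). lra.
Qed.

Lemma nearest_zero_right (F : R -> R) (a x : R) :
  x < a -> F a = 0 -> F x <> 0 ->
  (forall s, x <= s <= a -> continuity_pt F s) ->
  exists z, x < z <= a /\ F z = 0 /\ forall s, x <= s < z -> F s <> 0.
Proof.
  intros Hxa Fa Fx Hc.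
  destruct (nearest_zero_left (fun s => F (- s)) (-a) (-x)) as [z [Hz [Fz Hn]]].
  - lra.
  - rewrite Ropp_involutive; auto.
  - rewrite Ropp_involutive; auto.
  - intros s Hs. apply continuity_pt_comp.
    + apply continuity_pt_opp, continuity_pt_id.
    + apply Hc. lra.
  - exists (- z). split; [lra|split; auto].
    intros s Hs. specialize (Hn (- s) ltac:(lra)). rewrite Ropp_involutive in Hn; auto.
Qed.





Lemma is_derive_lnsq F s d : F s <> 0 -> is_derive F s d ->
  is_derive (fun t => ln (F t * F t)) s (2 * d / F s).
Proof.
  intros Fs Hd.
  assert (Hp : 0 < F s * F s) by (apply Rsqr_pos_lt; auto).
  assert (H1 : is_derive (fun t => F t * F t) s (d * F s + F s * d)).
  { apply (is_derive_mult F F s d d); auto. intros; apply Rmult_comm. }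
  pose proof (is_derive_comp ln (fun t => F t * F t) s _ _ (is_derive_ln _ Hp) H1) as H2.
  eapply is_derive_ext; [intros t; reflexivity|].
  replace (2 * d / F s) with (scal (d * F s + F s * d) (/ (F s * F s))); auto.
  unfold scal; simpl; unfold mult; simpl. field; auto.
Qed.

Lemma zero_bound (F dF W : R -> R) (z x L : R) :
  z < x -> 0 <= L -> F z = 0 -> continuity_pt F z ->
  (forall s, z < s <= x -> F s <> 0 /\ is_derive F s (dF s)) ->
  (forall s, z < s <= x -> W s * Rabs (dF s) <= Rabs (F s)) ->
  (forall s, z < s <= x -> W x - L * (x - s) <= W s) ->
  W x <= L * (x - z).
Proof.
  intros Hzx HL Fz Fc HF HW HLip.
  destruct (Rle_dec (W x) (L * (x - z))) as [|Hn]; auto. exfalso.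
  set (eps := W x - L * (x - z)).
  assert (Heps : 0 < eps) by (unfold eps; lra).
  assert (Hw : forall s, z < s <= x -> eps <= W s).
  { intros s Hs. specialize (HLip s Hs). unfold eps.
    assert (L * (x - s) <= L * (x - z)) by (apply Rmult_le_compat_l; lra). lra. }
  assert (Hk : forall s, z < s <= x -> Rabs (2 * dF s / F s) <= 2 / eps).
  { intros s Hs. destruct (HF s Hs) as [Fs _]. specialize (HW s Hs). specialize (Hw s Hs).
    assert (HFa : 0 < Rabs (F s)) by (apply Rabs_pos_lt; auto).
    unfold Rdiv. rewrite !Rabs_mult, Rabs_inv, (Rabs_right 2) by lra.
    assert (eps * Rabs (dF s) <= Rabs (F s)).
    { apply Rle_trans with (W s * Rabs (dF s)); auto.
      apply Rmult_le_compat_r; auto; apply Rabs_pos. }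
    assert (Rabs (dF s) * / Rabs (F s) <= / eps).
    { apply Rmult_le_reg_r with (Rabs (F s)); auto.
      rewrite Rmult_assoc, Rinv_l, Rmult_1_r by lra.
      apply Rmult_le_reg_l with eps; auto.
      rewrite <- Rmult_assoc, Rinv_r, Rmult_1_l by lra. lra. }
    lra. }
  set (G := fun t => ln (F t * F t)).
  assert (HG : forall s, z < s <= x -> G s >= G x - 2 / eps * (x - z)).
  { intros s Hs.
    destruct (MVT_gen G s x (fun t => 2 * dF t / F t)) as [c [Hc Hc']].
    - intros t Ht. rewrite Rmin_left in Ht by lra. rewrite Rmax_right in Ht by lra.
      destruct (HF t ltac:(lra)) as [Ft Hd]. apply is_derive_lnsq; auto.
    - intros t Ht. rewrite Rmin_left in Ht by lra. rewrite Rmax_right in Ht by lra.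
      destruct (HF t ltac:(lra)) as [Ft Hd]. eapply deriv_cont. apply is_derive_lnsq; eauto.
    - rewrite Rmin_left in Hc by lra. rewrite Rmax_right in Hc by lra.
      specialize (Hk c ltac:(lra)).
      assert (Habs : Rabs (G x - G s) <= 2 / eps * (x - z)).
      { rewrite Hc', Rabs_mult, (Rabs_right (x - s)) by lra.
        apply Rle_trans with (2 / eps * (x - s)).
        - apply Rmult_le_compat_r; lra.
        - apply Rmult_le_compat_l; [|lra]. unfold Rdiv; apply Rmult_le_pos; [lra|].
          left; apply Rinv_0_lt_compat; auto. }
      apply Rabs_le_between in Habs. lra. }
  set (eta := exp (G x - 2 / eps * (x - z))).
  assert (Heta : 0 < eta) by apply exp_pos.
  assert (HFs : forall s, z < s <= x -> eta <= F s * F s).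
  { intros s Hs. destruct (HF s Hs) as [Fs _].
    assert (Hp : 0 < F s * F s) by (apply Rsqr_pos_lt; auto).
    rewrite <- (exp_ln (F s * F s)) by auto. unfold eta.
    pose proof (HG s Hs) as HGs; unfold G in *.
    destruct HGs as [Hlt|Heq].
    - left; apply exp_increasing; lra.
    - right; f_equal; lra. }
  destruct (cont_eps F z Fc (Rmin 1 eta) ltac:(apply Rmin_glb_lt; lra)) as [d [Hd Hd']].
  set (s := z + Rmin d (x - z) / 2).
  assert (Hs : z < s <= x).
  { unfold s. assert (0 < Rmin d (x - z)) by (apply Rmin_glb_lt; lra).
    pose proof (Rmin_r d (x - z)). lra. }
  specialize (HFs s Hs).
  specialize (Hd' s). rewrite Fz, Rminus_0_r in Hd'.
  assert (Hsd : Rabs (s - z) < d).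
  { unfold s. rewrite Rabs_right; assert (0 < Rmin d (x - z)) by (apply Rmin_glb_lt; lra);
    pose proof (Rmin_l d (x - z)); lra. }
  specialize (Hd' Hsd).
  pose proof (Rmin_l 1 eta). pose proof (Rmin_r 1 eta).
  assert (Rabs (F s) * Rabs (F s) < eta).
  { pose proof (Rabs_pos (F s)). nra. }
  rewrite <- Rabs_mult in H1. rewrite Rabs_right in H1; [lra|].
  apply Rle_ge, Rle_0_sqr.
Qed.




Lemma zero_bound_right (F dF W : R -> R) (z x L : R) :
  x < z -> 0 <= L -> F z = 0 -> continuity_pt F z ->
  (forall s, x <= s < z -> F s <> 0 /\ is_derive F s (dF s)) ->
  (forall s, x <= s < z -> W s * Rabs (dF s) <= Rabs (F s)) ->
  (forall s, x <= s < z -> W x - L * (s - x) <= W s) ->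
  W x <= L * (z - x).
Proof.
  intros Hxz HL Fz Fc HF HW HLip.
  pose proof (zero_bound (fun s => F (- s)) (fun s => - dF (- s)) (fun s => W (- s))
    (- z) (- x) L) as H.
  cbv beta in H. rewrite !Ropp_involutive in H.
  replace (z - x) with (- x - - z) by ring. apply H; auto; try lra.
  - apply continuity_pt_comp.
    + apply continuity_pt_opp, continuity_pt_id.
    + rewrite Ropp_involutive; auto.
  - intros s Hs. destruct (HF (- s) ltac:(lra)) as [H1 H2]. split; auto.
    pose proof (is_derive_comp F (fun t => - t) s _ _ H2 (is_derive_opp (fun t => t) s 1 (is_derive_id s))) as H3.
    eapply is_derive_ext; [intros t; reflexivity|].
    replace (- dF (- s)) with (scal (opp 1) (dF (- s))); auto.
    unfold scal, opp; simpl; unfold mult; simpl. ring.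
  - intros s Hs. rewrite Rabs_Ropp. apply HW. lra.
  - intros s Hs. specialize (HLip (- s) ltac:(lra)).
    replace (- x - s) with (- s - x) by ring. auto.
Qed.

Lemma compact_bound (P : R -> Prop) (g : R -> R) (a c : R) : a <= c ->
  (forall z, a <= z <= c -> exists e M, 0 < e /\
     forall x, P x -> Rabs (x - z) < e -> Rabs (g x) <= M) ->
  exists M, forall x, P x -> a <= x <= c -> Rabs (g x) <= M.
Proof.
  intros Hac Hloc.
  set (E := fun s => a <= s <= c /\ exists M, forall x, P x -> a <= x <= s -> Rabs (g x) <= M).
  assert (Ea : E a).
  { split; [lra|]. destruct (Hloc a ltac:(lra)) as [e [M [He HM]]].
    exists M. intros x Px Hx. apply HM; auto. replace (x - a) with 0 by lra.
    rewrite Rabs_R0; auto. }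
  assert (HB : bound E) by (exists c; intros s [Hs _]; lra).
  destruct (completeness E HB (ex_intro _ a Ea)) as [s [Hub Hlub]].
  assert (as_ : a <= s) by (apply Hub; auto).
  assert (sc : s <= c) by (apply Hlub; intros t [Ht _]; lra).
  destruct (Hloc s (conj as_ sc)) as [e [M0 [He HM0]]].
  assert (Hex : exists t, E t /\ s - e < t).
  { destruct (classic (exists t, E t /\ s - e < t)) as [|Hn]; auto.
    assert (is_upper_bound E (s - e)).
    { intros t Et. destruct (Rle_dec t (s - e)); auto. exfalso; apply Hn; exists t; split; auto; lra. }
    specialize (Hlub _ H). lra. }
  destruct Hex as [t [[Ht [M HM]] Hts]].
  assert (ts : t <= s) by (apply Hub; split; auto; exists M; auto).
  set (s' := Rmin c (s + e / 2)).
  assert (Es' : E s').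
  { split. { unfold s'. split; [apply Rmin_glb; lra| apply Rmin_l]. }
    exists (Rmax M M0). intros x Px Hx.
    destruct (Rle_dec x t).
    - apply Rle_trans with M; [apply HM; auto; lra| apply Rmax_l].
    - apply Rle_trans with M0; [|apply Rmax_r]. apply HM0; auto.
      pose proof (Rmin_r c (s + e / 2)). unfold s' in Hx.
      apply Rabs_def1; lra. }
  assert (s' <= s) by (apply Hub; auto).
  assert (Hsc : s = c).
  { unfold s' in H. destruct (Rle_dec c (s + e / 2)).
    - rewrite Rmin_left in H; lra.
    - rewrite Rmin_right in H; lra. }
  destruct Es' as [_ [M1 HM1]].
  exists M1. intros x Px Hx. apply HM1; auto.
  unfold s'. rewrite Rmin_left; lra.
Qed.


Lemma radius_ge c R1 : 0 < R1 -> (forall h, Rabs h < R1 -> ex_pseries c h) ->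
  Rbar_le R1 (CV_radius c).
Proof.
  intros HR Hc. pose proof (CV_radius_ge_0 c) as H0.
  pose proof (CV_disk_outside c) as Hout.
  destruct (CV_radius c) as [r| |] eqn:E; simpl in *; auto.
  destruct (Rle_dec R1 r) as [|Hn]; auto. exfalso.
  set (h := (r + R1) / 2).
  assert (Hh : Rabs h < R1) by (unfold h; rewrite Rabs_right; lra).
  destruct (Hc h Hh) as [l Hl].
  apply (Hout h). simpl. unfold h; rewrite Rabs_right; lra.
  apply ex_series_lim_0. exists l. apply is_pseries_R. exact Hl.
Qed.

Lemma radius_decr c m : CV_radius (PS_decr_n c m) = CV_radius c.
Proof.
  induction m.
  - apply CV_radius_ext. intros n. reflexivity.
  - rewrite <- IHm, <- (CV_radius_decr_1 (PS_decr_n c m)).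
    apply CV_radius_ext. intros n. unfold PS_decr_n, PS_decr_1. f_equal. lia.
Qed.

Lemma rep_at b f (Han : real_analytic_on 0 b f) z : 0 < z < b ->
  exists R1 c, 0 < R1 /\ 0 < z - R1 /\ z + R1 < b /\ Rbar_le R1 (CV_radius c) /\
    forall x, Rabs (x - z) < R1 -> f x = PSeries c (x - z).
Proof.
  intros Hz. destruct (Han z Hz) as [r [Hr [c Hc]]].
  set (R1 := Rmin r (Rmin z (b - z)) / 2).
  assert (H1 : R1 <= r / 2) by (unfold R1; pose proof (Rmin_l r (Rmin z (b - z))); lra).
  assert (H2 : R1 <= z / 2) by (unfold R1; pose proof (Rmin_r r (Rmin z (b - z)));
                                 pose proof (Rmin_l z (b - z)); lra).
  assert (H3 : R1 <= (b - z) / 2) by (unfold R1; pose proof (Rmin_r r (Rmin z (b - z)));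
                                 pose proof (Rmin_r z (b - z)); lra).
  assert (H0 : 0 < R1).
  { unfold R1. assert (0 < Rmin r (Rmin z (b - z))); [|lra].
    apply Rmin_glb_lt; auto. apply Rmin_glb_lt; lra. }
  assert (Hc' : forall x, Rabs (x - z) < 2 * R1 -> is_pseries c (x - z) (f x)).
  { intros x Hx. apply Rabs_def2 in Hx. apply Hc; [lra|]. apply Rabs_def1; lra. }
  exists R1, c. split; [auto|split;[lra|split;[lra|split]]].
  - apply radius_ge; auto. intros h Hh. exists (f (z + h)).
    assert (Hq : is_pseries c (z + h - z) (f (z + h))).
    { apply Hc'. replace (z + h - z) with h by ring. lra. }
    replace (z + h - z) with h in Hq by ring. exact Hq.
  - intros x Hx. symmetry. apply is_pseries_unique. apply Hc'. lra.
Qed.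

Lemma rep_deriv (g : R -> R) z R1 c : 0 < R1 -> Rbar_le R1 (CV_radius c) ->
  (forall y, Rabs (y - z) < R1 -> g y = PSeries c (y - z)) ->
  forall y, Rabs (y - z) < R1 ->
    is_derive g y (PSeries (PS_derive c) (y - z)) /\
    Derive g y = PSeries (PS_derive c) (y - z).
Proof.
  intros HR Hrad Hg y Hy.
  assert (Hd : is_derive g y (PSeries (PS_derive c) (y - z))).
  { apply is_derive_ext_loc with (fun t => PSeries c (t - z)).
    - assert (Hp : 0 < R1 - Rabs (y - z)) by lra.
      exists (mkposreal _ Hp). intros t Ht. symmetry. apply Hg.
      change (Rabs (t - y) < R1 - Rabs (y - z)) in Ht.
      apply Rle_lt_trans with (Rabs (t - y) + Rabs (y - z)).
      + replace (t - z) with ((t - y) + (y - z)) by ring. apply Rabs_triang.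
      + lra.
    - assert (Hl : Rbar_lt (Rabs (y - z)) (CV_radius c)).
      { eapply Rbar_lt_le_trans; [|exact Hrad]. simpl; auto. }
      pose proof (is_derive_comp (PSeries c) (fun t => t - z) y _ 1 (is_derive_PSeries c (y - z) Hl)) as H.
      eapply is_derive_ext; [intros; reflexivity|].
      replace (PSeries (PS_derive c) (y - z)) with (scal 1 (PSeries (PS_derive c) (y - z))).
      + apply H. auto_derive; auto. 
      + unfold scal; simpl; unfold mult; simpl; ring. }
  split; auto. apply is_derive_unique; auto.
Qed.

Lemma f_derivs b f (Han : real_analytic_on 0 b f) x : 0 < x < b ->
  is_derive f x (Derive f x) /\ is_derive (Derive f) x (Derive_n f 2 x).
Proof.
  intros Hx. destruct (rep_at b f Han x Hx) as [R1 [c [HR [_ [_ [Hrad Hrep]]]]]].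
  assert (Hx0 : Rabs (x - x) < R1) by (rewrite Rminus_diag, Rabs_R0; auto).
  pose proof (rep_deriv f x R1 c HR Hrad Hrep) as D1.
  destruct (D1 x Hx0) as [Hd1 He1]. rewrite <- He1 in Hd1. split; auto.
  assert (Hrad' : Rbar_le R1 (CV_radius (PS_derive c))) by (rewrite CV_radius_derive; auto).
  assert (Hrep' : forall y, Rabs (y - x) < R1 -> Derive f y = PSeries (PS_derive c) (y - x)).
  { intros y Hy. apply (D1 y Hy). }
  destruct (rep_deriv (Derive f) x R1 _ HR Hrad' Hrep' x Hx0) as [Hd2 He2].
  rewrite <- He2 in Hd2. exact Hd2.
Qed.

Lemma first_nonzero (c : nat -> R) n : c n <> 0 ->
  exists m, c m <> 0 /\ forall k, (k < m)%nat -> c k = 0.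
Proof.
  induction n as [n IH] using (well_founded_induction Wf_nat.lt_wf). intros Hn.
  destruct (classic (exists k, (k < n)%nat /\ c k <> 0)) as [[k [Hk Hck]]|Hno].
  - apply (IH k Hk Hck).
  - exists n; split; auto. intros k Hk. apply NNPP; intro Hc. apply Hno; eauto.
Qed.

Lemma abs_div_le (N D D' : R) : 0 < D' -> D' <= D -> Rabs (N / D) <= Rabs N / D'.
Proof.
  intros HD' HD. unfold Rdiv. rewrite Rabs_mult, Rabs_inv, (Rabs_right D) by lra.
  apply Rmult_le_compat_l; [apply Rabs_pos|]. apply Rinv_le_contravar; auto.
Qed.

Lemma H_alg0 (x a p q : R) : a <> 0 ->
  Rabs (x ^ 2 * a * q / (a ^ 2 + x ^ 2 * p ^ 2)) <= x ^ 2 * Rabs q / Rabs a.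
Proof.
  intros Ha.
  assert (Ha2 : 0 < a ^ 2) by (simpl; rewrite Rmult_1_r; apply Rsqr_pos_lt; auto).
  assert (0 <= x ^ 2 * p ^ 2) by (apply Rmult_le_pos; apply pow2_ge_0).
  eapply Rle_trans; [apply (abs_div_le _ _ (a ^ 2)); lra|].
  rewrite !Rabs_mult. rewrite (Rabs_right (x ^ 2)) by (apply Rle_ge, pow2_ge_0).
  assert (Haa : 0 < Rabs a) by (apply Rabs_pos_lt; auto).
  replace (a ^ 2) with (Rabs a * Rabs a).
  - right. field. lra.
  - rewrite <- Rabs_mult. rewrite Rabs_right; [ring|]. apply Rle_ge. nra.
Qed.

Lemma H_alg (x h u g A B P P1 P2 : R) : x <> 0 -> h <> 0 -> u <> 0 -> B <> 0 ->
  P = h * u * g -> P1 = u * B -> h * P2 = u * A ->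
  Rabs (x ^ 2 * P * P2 / (P ^ 2 + x ^ 2 * P1 ^ 2)) <= Rabs (g * A / B ^ 2).
Proof.
  intros Hx Hh Hu HB HP HP1 HP2.
  assert (E2 : P2 = u * A / h) by (rewrite <- HP2; field; auto).
  assert (Hx2 : 0 < x ^ 2) by (simpl; rewrite Rmult_1_r; apply Rsqr_pos_lt; auto).
  assert (HB2 : 0 < B ^ 2) by (simpl; rewrite Rmult_1_r; apply Rsqr_pos_lt; auto).
  assert (Hh2 : 0 <= h ^ 2 * g ^ 2) by (apply Rmult_le_pos; apply pow2_ge_0).
  assert (Hu2 : 0 < u ^ 2) by (simpl; rewrite Rmult_1_r; apply Rsqr_pos_lt; auto).
  replace (x ^ 2 * P * P2 / (P ^ 2 + x ^ 2 * P1 ^ 2)) with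
    (x ^ 2 * (g * A) / (h ^ 2 * g ^ 2 + x ^ 2 * B ^ 2)).
  2:{ rewrite E2, HP, HP1. field.
      assert (0 < x ^ 2 * B ^ 2) by (apply Rmult_lt_0_compat; auto).
      split; auto. split.
      - replace ((h * u * g) ^ 2 + (x * (u * B)) ^ 2) with (u ^ 2 * (h ^ 2 * g ^ 2 + x ^ 2 * B ^ 2)) by ring.
        assert (0 < u ^ 2 * (h ^ 2 * g ^ 2 + x ^ 2 * B ^ 2)); [|lra].
        apply Rmult_lt_0_compat; auto. lra.
      - replace ((h * g) ^ 2 + (x * B) ^ 2) with (h ^ 2 * g ^ 2 + x ^ 2 * B ^ 2) by ring. lra. }
  eapply Rle_trans; [apply (abs_div_le _ _ (x ^ 2 * B ^ 2)); [apply Rmult_lt_0_compat; auto| lra]|].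
  rewrite Rabs_mult, (Rabs_right (x ^ 2)) by lra.
  unfold Rdiv. rewrite (Rabs_mult (g * A)), Rabs_inv, (Rabs_right (B ^ 2)) by lra.
  right. field. lra.
Qed.

Lemma pow_pred_mul m h : INR m * h ^ (pred m) * h = INR m * h ^ m.
Proof. destruct m; simpl; ring. Qed.





Lemma exd_cont g x : ex_derive g x -> continuity_pt g x.
Proof. intros H. apply (deriv_cont g x (Derive g x)). apply Derive_correct; auto. Qed.

Lemma H_local b f (Han : real_analytic_on 0 b f) z : 0 < z < b ->
  exists e M, 0 < e /\ forall x, (0 < x < b /\ f x <> 0) -> Rabs (x - z) < e ->
    Rabs (Hf f x) <= M.
Proof.
  intros Hz. destruct (rep_at b f Han z Hz) as [R1 [c [HR [Hz1 [Hz2 [Hrad Hrep]]]]]].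
  pose proof (rep_deriv f z R1 c HR Hrad Hrep) as D1.
  assert (Hrad' : Rbar_le R1 (CV_radius (PS_derive c))) by (rewrite CV_radius_derive; auto).
  assert (Hrep' : forall y, Rabs (y - z) < R1 -> Derive f y = PSeries (PS_derive c) (y - z)).
  { intros y Hy. apply (D1 y Hy). }
  pose proof (rep_deriv (Derive f) z R1 _ HR Hrad' Hrep') as D2.
  assert (Hrep2 : forall y, Rabs (y - z) < R1 ->
    Derive_n f 2 y = PSeries (PS_derive (PS_derive c)) (y - z)).
  { intros y Hy. apply (D2 y Hy). }
  assert (Hlt : forall a, Rbar_le R1 (CV_radius a) -> forall h, Rabs h < R1 -> Rbar_lt (Rabs h) (CV_radius a)).
  { intros a Ha h Hh. eapply Rbar_lt_le_trans; [|exact Ha]. simpl; auto. }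
  assert (R0' : Rabs 0 < R1) by (rewrite Rabs_R0; auto).
  destruct (classic (forall n, c n = 0)) as [Hall|Hex].
  { exists R1, 0. split; auto. intros x [Hx Fx] Hxz. exfalso. apply Fx.
    rewrite (Hrep x Hxz). rewrite (PSeries_ext c (fun _ => 0)) by auto. apply PSeries_const_0. }
  apply not_all_ex_not in Hex. destruct Hex as [n Hn]. 
  destruct (first_nonzero c n Hn) as [m [Hm Hbelow]].
  destruct m as [|m'].
  -
    set (Q := fun h => (z + h) ^ 2 * PSeries (PS_derive (PS_derive c)) h / PSeries c h).
    assert (HQ : ex_derive Q 0).
    { unfold Q. auto_derive. repeat split;
        try (apply ex_derive_PSeries; apply Hlt; [rewrite ?CV_radius_derive; auto | auto]).
      rewrite PSeries_0; auto. }
    destruct (cont_eps Q 0 (exd_cont Q 0 HQ) 1 Rlt_0_1) as [d [Hd HQd]].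
    exists (Rmin R1 d), (Rabs (Q 0) + 1). split; [apply Rmin_glb_lt; auto|].
    intros x [Hx Fx] Hxz.
    assert (H1 : Rabs (x - z) < R1) by (pose proof (Rmin_l R1 d); lra).
    assert (H2 : Rabs (x - z - 0) < d) by (rewrite Rminus_0_r; pose proof (Rmin_r R1 d); lra).
    specialize (HQd _ H2).
    unfold Hf. rewrite (Hrep x H1), (Hrep' x H1), (Hrep2 x H1).
    rewrite (Hrep x H1) in Fx.
    eapply Rle_trans; [apply H_alg0; auto|].
    assert (E : x ^ 2 * Rabs (PSeries (PS_derive (PS_derive c)) (x - z)) / Rabs (PSeries c (x - z))
              = Rabs (Q (x - z))).
    { unfold Q. replace (z + (x - z)) with x by ring.
      unfold Rdiv. rewrite !Rabs_mult, Rabs_inv, (Rabs_right (x ^ 2)); auto.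
      apply Rle_ge, pow2_ge_0. }
    rewrite E. pose proof (Rabs_triang_inv (Q (x - z)) (Q 0)). lra.
  - set (m := S m').
    set (d := PS_decr_n c m).
    assert (Hradd : forall k, Rbar_le R1 (CV_radius (PS_derive_n k d))).
    { intros k. rewrite CV_radius_derive_n. unfold d. rewrite radius_decr. auto. }
    assert (Hr0 : Rbar_le R1 (CV_radius d)) by (unfold d; rewrite radius_decr; auto).
    assert (Hr1 : Rbar_le R1 (CV_radius (PS_derive d))) by (rewrite CV_radius_derive; auto).
    assert (Hr2 : Rbar_le R1 (CV_radius (PS_derive (PS_derive d)))) by (rewrite !CV_radius_derive; auto).
    set (G := PSeries d). set (G1 := PSeries (PS_derive d)). set (G2 := PSeries (PS_derive (PS_derive d))).
    assert (HPG : forall t, PSeries c t = t ^ m * G t).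
    { intros t. apply PSeries_decr_n_aux. auto. }
    assert (E1 : forall h, Rabs h < R1 ->
      PSeries (PS_derive c) h = INR m * h ^ m' * G h + h ^ m * G1 h).
    { intros h Hh.
      assert (Ha : is_derive (PSeries c) h (PSeries (PS_derive c) h)).
      { apply is_derive_PSeries. apply Hlt; auto. }
      assert (Hb : is_derive (fun t => t ^ m * G t) h (INR m * h ^ m' * G h + h ^ m * G1 h)).
      { unfold G. auto_derive.
        - apply ex_derive_PSeries. apply Hlt; auto.
        - rewrite Derive_PSeries by (apply Hlt; auto). unfold G1, m. simpl. ring. }
      apply is_derive_ext with (g := PSeries c) in Hb; [|intros t; rewrite HPG; auto].
      apply is_derive_unique in Ha. apply is_derive_unique in Hb. congruence. }
    assert (E2 : forall h, Rabs h < R1 ->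
      PSeries (PS_derive (PS_derive c)) h =
      INR m * (INR m' * h ^ (pred m') * G h + h ^ m' * G1 h) + (INR m * h ^ m' * G1 h + h ^ m * G2 h)).
    { intros h Hh.
      assert (Ha : is_derive (PSeries (PS_derive c)) h (PSeries (PS_derive (PS_derive c)) h)).
      { apply is_derive_PSeries. apply Hlt; auto. }
      assert (Hb : is_derive (fun t => INR m * t ^ m' * G t + t ^ m * G1 t) h
         (INR m * (INR m' * h ^ (pred m') * G h + h ^ m' * G1 h) + (INR m * h ^ m' * G1 h + h ^ m * G2 h))).
      { unfold G, G1. auto_derive.
        - repeat split; apply ex_derive_PSeries; apply Hlt; auto.
        - rewrite !Derive_PSeries by (apply Hlt; auto). unfold G2, m. simpl. ring. }
      apply is_derive_ext_loc with (g := PSeries (PS_derive c)) in Hb.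
      - apply is_derive_unique in Ha. apply is_derive_unique in Hb. congruence.
      - assert (Hp : 0 < R1 - Rabs h) by lra.
        exists (mkposreal _ Hp). intros t Ht. symmetry. apply E1.
        change (Rabs (t - h) < R1 - Rabs h) in Ht.
        replace t with ((t - h) + h) by ring.
        eapply Rle_lt_trans; [apply Rabs_triang|]. lra. }
    set (B := fun h => INR m * G h + h * G1 h).
    set (A := fun h => INR m * INR m' * G h + 2 * INR m * h * G1 h + h ^ 2 * G2 h).
    set (Qr := fun h => G h * A h / B h ^ 2).
    assert (HB0 : B 0 <> 0).
    { unfold B, G. rewrite PSeries_0, Rmult_0_l, Rplus_0_r.
      unfold d, PS_decr_n. rewrite Nat.add_0_r. apply Rmult_integral_contrapositive; split; auto.
      apply not_0_INR. unfold m; lia. }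
    assert (HQ : ex_derive Qr 0).
    { unfold Qr, A, B, G, G1, G2. auto_derive. repeat split;
        try (apply ex_derive_PSeries; apply Hlt; [rewrite ?CV_radius_derive; auto | auto]).
      intro HH. apply HB0. unfold B, G, G1. simpl.
      destruct (Rmult_integral _ _ HH) as [H|H]; [exact H|]. rewrite Rmult_1_r in H; exact H. }
    assert (HBd : ex_derive B 0).
    { unfold B, G, G1. auto_derive. repeat split;
        try (apply ex_derive_PSeries; apply Hlt; [rewrite ?CV_radius_derive; auto | auto]). }
    destruct (cont_eps Qr 0 (exd_cont Qr 0 HQ) 1 Rlt_0_1) as [d1 [Hd1 HQd]].
    destruct (cont_eps B 0 (exd_cont B 0 HBd) (Rabs (B 0)) (Rabs_pos_lt _ HB0)) as [d2 [Hd2 HBd2]].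
    exists (Rmin R1 (Rmin d1 d2)), (Rabs (Qr 0) + 1).
    split; [apply Rmin_glb_lt; auto; apply Rmin_glb_lt; auto|].
    intros x [Hx Fx] Hxz.
    pose proof (Rmin_l R1 (Rmin d1 d2)). pose proof (Rmin_r R1 (Rmin d1 d2)).
    pose proof (Rmin_l d1 d2). pose proof (Rmin_r d1 d2).
    assert (Hx1 : Rabs (x - z) < R1) by lra.
    set (h := x - z) in *.
    assert (Hh1 : Rabs (h - 0) < d1) by (rewrite Rminus_0_r; lra).
    assert (Hh2 : Rabs (h - 0) < d2) by (rewrite Rminus_0_r; lra).
    specialize (HQd _ Hh1). specialize (HBd2 _ Hh2).
    assert (HBh : B h <> 0).
    { intro HH. rewrite HH, Rminus_0_l, Rabs_Ropp in HBd2. lra. }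
    rewrite (Hrep x Hx1) in Fx. fold h in Fx.
    assert (Hh0 : h <> 0).
    { intro HH. apply Fx. rewrite HH, PSeries_0. apply Hbelow. unfold m; lia. }
    unfold Hf. rewrite (Hrep x Hx1), (Hrep' x Hx1), (Hrep2 x Hx1). fold h.
    eapply Rle_trans.
    { apply (H_alg x h (h ^ m') (G h) (A h) (B h)).
      - lra.
      - auto.
      - apply pow_nonzero; auto.
      - auto.
      - rewrite HPG. unfold m. simpl. ring.
      - rewrite (E1 h Hx1). unfold B, m. simpl. ring.
      - rewrite (E2 h Hx1). unfold A.
        pose proof (pow_pred_mul m' h) as Hpm.
        transitivity (INR m * G h * (INR m' * h ^ pred m' * h) + h * (h ^ m' * G1 h) * INR m
                      + h * (INR m * h ^ m' * G1 h + h ^ m * G2 h)); [ring|].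
        rewrite Hpm. unfold m. simpl. ring. }
    fold (Qr h). pose proof (Rabs_triang_inv (Qr h) (Qr 0)). lra.
Qed.

Definition kk (f : R -> R) x := x * Derive f x / f x.
Definition ww (f : R -> R) x := / sqrt (1 + (kk f x) ^ 2).

Lemma w_alg x a p q : a <> 0 ->
  Rabs (x * (- (((1 * p + x * (1 * q)) * / a + x * p * (- (1 * p) * / (a * a))) *
       ((1 + 1) * (x * p * / a * 1)) * / (2 * sqrt (1 + x * p * / a * (x * p * / a * 1)))) *
      / (sqrt (1 + x * p * / a * (x * p * / a * 1)) * sqrt (1 + x * p * / a * (x * p * / a * 1)))))
  <= 2 + Rabs (x ^ 2 * a * q / (a ^ 2 + x ^ 2 * p ^ 2)).
Proof.
  intros Ha.
  set (k := x * p * / a).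
  replace (1 + k * (k * 1)) with (1 + k ^ 2) by ring.
  set (s := sqrt (1 + k ^ 2)).
  assert (Hk2 : 0 <= k ^ 2) by apply pow2_ge_0.
  assert (Hs2 : s * s = 1 + k ^ 2) by (unfold s; apply sqrt_sqrt; lra).
  assert (Hs0 : 0 <= s) by (unfold s; apply sqrt_pos).
  assert (Hs1 : 1 <= s) by nra.
  assert (Hka : Rabs k <= s).
  { pose proof (Rabs_pos k). assert (Rabs k * Rabs k = k ^ 2) by (rewrite <- Rabs_mult, Rabs_right; [ring| apply Rle_ge; nra]). nra. }
  set (H := x ^ 2 * a * q / (a ^ 2 + x ^ 2 * p ^ 2)).
  assert (Hden : 0 < a ^ 2 + x ^ 2 * p ^ 2).
  { assert (0 < a ^ 2) by (simpl; rewrite Rmult_1_r; apply Rsqr_pos_lt; auto).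
    assert (0 <= x ^ 2 * p ^ 2) by (apply Rmult_le_pos; apply pow2_ge_0). lra. }
  assert (HX : k - k ^ 2 + H * (s * s) = x * ((p + x * q) / a - x * p ^ 2 / a ^ 2)).
  { rewrite Hs2. unfold H, k. field. split; lra. }
  replace (x * (- (((1 * p + x * (1 * q)) * / a + x * p * (- (1 * p) * / (a * a))) *
       ((1 + 1) * (k * 1)) * / (2 * s)) * / (s * s)))
    with (- (k * (k - k ^ 2 + H * (s * s))) / (s * s * s)).
  2:{ rewrite HX. unfold k. field. split; lra. }
  set (Y := k - k ^ 2 + H * (s * s)).
  assert (HY : Rabs Y <= Rabs k + Rabs k * Rabs k + Rabs H * (s * s)).
  { unfold Y. eapply Rle_trans; [apply Rabs_triang|].
    rewrite Rabs_mult, (Rabs_right (s * s)) by nra.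
    eapply Rle_trans; [apply Rplus_le_compat_r; apply Rabs_triang|].
    rewrite Rabs_Ropp. rewrite <- Rabs_mult. replace (k * k) with (k ^ 2) by ring. lra. }
  assert (Hs3 : 0 < s * s * s) by nra.
  unfold Rdiv. rewrite Rabs_mult, Rabs_Ropp, Rabs_mult, Rabs_inv, (Rabs_right (s * s * s)) by lra.
  apply Rmult_le_reg_r with (s * s * s); auto.
  rewrite Rmult_assoc, Rinv_l, Rmult_1_r by lra.
  pose proof (Rabs_pos k). pose proof (Rabs_pos H). pose proof (Rabs_pos Y).
  assert (Rabs k * Rabs Y <= Rabs k * (Rabs k + Rabs k * Rabs k + Rabs H * (s * s))) by (apply Rmult_le_compat_l; auto).
  assert (Rabs k * (Rabs k + Rabs k * Rabs k + Rabs H * (s * s)) <= s * (s + s * s + Rabs H * (s * s))).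
  { apply Rmult_le_compat; nra. }
  nra.
Qed.

Lemma ww_deriv f x : f x <> 0 -> is_derive f x (Derive f x) ->
  is_derive (Derive f) x (Derive_n f 2 x) ->
  exists d, is_derive (ww f) x d /\ Rabs (x * d) <= 2 + Rabs (Hf f x).
Proof.
  intros Fx D1 D2. eexists; split.
  { unfold ww, kk. auto_derive.
    - repeat split; auto.
      + exists (Derive_n f 2 x); auto.
      + exists (Derive f x); auto.
      + set (k := x * Derive f x * / f x). assert (0 <= k * (k * 1)) by nra. lra.
      + set (k := x * Derive f x * / f x). assert (0 <= k * (k * 1)) by nra.
        apply Rgt_not_eq, sqrt_lt_R0. lra.
    - reflexivity. }
  replace (Derive (fun x0 => f x0) x) with (Derive f x) by reflexivity.
  replace (Derive (fun x0 => Derive f x0) x) with (Derive_n f 2 x) by reflexivity.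
  unfold Hf. apply w_alg; auto.
Qed.


Lemma H_global b f (Han : real_analytic_on 0 b f) (hb : 0 < b)
  (h2 : exists C, 0 < C /\
          (forall eps, 0 < eps -> exists delta, 0 < delta /\
             forall x, 0 < x < b -> x < delta -> Rabs (Hf f x) <= C + eps) /\
          (forall eps, 0 < eps -> exists delta, 0 < delta /\
             forall x, 0 < x < b -> b - delta < x -> Rabs (Hf f x) <= C + eps)) :
  exists K, 0 <= K /\ forall x, 0 < x < b -> f x <> 0 -> Rabs (Hf f x) <= K.
Proof.
  destruct h2 as [C [HC [H0 Hb]]].
  destruct (H0 1 Rlt_0_1) as [da [Hda Hda']].
  destruct (Hb 1 Rlt_0_1) as [db [Hdb Hdb']].
  destruct (Rle_dec da (b - db)) as [Hle|Hnle].
  - destruct (compact_bound (fun x => 0 < x < b /\ f x <> 0) (Hf f) da (b - db) Hle) as [M HM].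
    { intros z Hz. apply H_local; auto. lra. }
    exists (Rmax (C + 1) M). split; [apply Rle_trans with (C + 1); [lra|apply Rmax_l]|].
    intros x Hx Fx.
    destruct (Rlt_dec x da).
    + apply Rle_trans with (C + 1); [apply Hda'; auto|apply Rmax_l].
    + destruct (Rlt_dec (b - db) x).
      * apply Rle_trans with (C + 1); [apply Hdb'; auto|apply Rmax_l].
      * apply Rle_trans with M; [apply HM; auto; lra|apply Rmax_r].
  - exists (C + 1). split; [lra|]. intros x Hx Fx.
    destruct (Rlt_dec x da).
    + apply Hda'; auto.
    + apply Hdb'; auto. lra.
Qed.

Lemma W_deriv f b K t :
  (forall x, 0 < x < b -> is_derive f x (Derive f x) /\ is_derive (Derive f) x (Derive_n f 2 x)) ->
  (forall x, 0 < x < b -> f x <> 0 -> Rabs (Hf f x) <= K) ->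
  exp t < b -> f (exp t) <> 0 ->
  exists d, is_derive (fun t => ww f (exp t)) t d /\ Rabs d <= 2 + K.
Proof.
  intros Hder HK Hb Fx.
  assert (Hx : 0 < exp t < b) by (split; auto; apply exp_pos).
  destruct (Hder _ Hx) as [D1 D2].
  destruct (ww_deriv f (exp t) Fx D1 D2) as [d [Hd Hbd]].
  exists (exp t * d). split.
  - pose proof (is_derive_comp (ww f) exp t d (exp t) Hd) as H.
    eapply is_derive_ext; [intros; reflexivity|].
    replace (exp t * d) with (scal (exp t) d) by reflexivity.
    apply H. auto_derive; auto. ring.
  - specialize (HK _ Hx Fx). lra.
Qed.

Lemma W_lip f b K t1 t2 :
  (forall x, 0 < x < b -> is_derive f x (Derive f x) /\ is_derive (Derive f) x (Derive_n f 2 x)) ->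
  (forall x, 0 < x < b -> f x <> 0 -> Rabs (Hf f x) <= K) ->
  t1 <= t2 -> (forall t, t1 <= t <= t2 -> exp t < b /\ f (exp t) <> 0) ->
  Rabs (ww f (exp t2) - ww f (exp t1)) <= (2 + K) * (t2 - t1).
Proof.
  intros Hder HK H12 Ht.
  set (W := fun t => ww f (exp t)).
  assert (HD : forall t, t1 <= t <= t2 -> is_derive W t (Derive W t) /\ Rabs (Derive W t) <= 2 + K).
  { intros t Htt. destruct (Ht t Htt) as [Hb Fx].
    destruct (W_deriv f b K t Hder HK Hb Fx) as [d [Hd Hbd]].
    assert (Hd' : is_derive W t d) by exact Hd. rewrite (is_derive_unique _ _ _ Hd'). split; auto. }
  destruct (MVT_gen W t1 t2 (Derive W)) as [c [Hc Hc']].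
  - intros t Htt. rewrite Rmin_left in Htt by lra. rewrite Rmax_right in Htt by lra.
    apply HD; lra.
  - intros t Htt. rewrite Rmin_left in Htt by lra. rewrite Rmax_right in Htt by lra.
    eapply deriv_cont. apply HD; lra.
  - rewrite Rmin_left in Hc by lra. rewrite Rmax_right in Hc by lra.
    change (Rabs (W t2 - W t1) <= (2 + K) * (t2 - t1)).
    rewrite Hc', Rabs_mult, (Rabs_right (t2 - t1)) by lra.
    apply Rmult_le_compat_r; [lra|]. apply HD; auto.
Qed.

Lemma ww_le f x : f x <> 0 -> ww f x * Rabs (x * Derive f x) <= Rabs (f x).
Proof.
  intros Fx. unfold ww, kk. set (k := x * Derive f x / f x).
  assert (E : Rabs (x * Derive f x) = Rabs k * Rabs (f x)).
  { rewrite <- Rabs_mult. f_equal. unfold k. field; auto. }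
  rewrite E.
  assert (Hk2 : 0 <= k ^ 2) by apply pow2_ge_0.
  set (s := sqrt (1 + k ^ 2)).
  assert (Hs2 : s * s = 1 + k ^ 2) by (unfold s; apply sqrt_sqrt; lra).
  assert (Hs0 : 0 <= s) by (unfold s; apply sqrt_pos).
  assert (Hka : Rabs k <= s).
  { pose proof (Rabs_pos k). assert (Rabs k * Rabs k = k ^ 2) by (rewrite <- Rabs_mult, Rabs_right; [ring| apply Rle_ge; nra]). nra. }
  assert (Hs1 : 0 < s) by nra.
  rewrite <- Rmult_assoc. rewrite <- (Rmult_1_l (Rabs (f x))) at 2.
  apply Rmult_le_compat_r; [apply Rabs_pos|].
  apply Rmult_le_reg_l with s; auto. rewrite <- Rmult_assoc, Rinv_r, Rmult_1_l, Rmult_1_r by lra. auto.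
Qed.

Lemma ww_bounds f x : f x <> 0 ->
  / (1 + Rabs (kk f x)) <= ww f x /\ ww f x <= 2 / (1 + Rabs (kk f x)) /\ 0 < ww f x.
Proof.
  intros Fx. unfold ww. set (k := kk f x).
  assert (Hk2 : 0 <= k ^ 2) by apply pow2_ge_0.
  set (s := sqrt (1 + k ^ 2)).
  assert (Hs2 : s * s = 1 + k ^ 2) by (unfold s; apply sqrt_sqrt; lra).
  assert (Hs0 : 0 <= s) by (unfold s; apply sqrt_pos).
  pose proof (Rabs_pos k).
  assert (Habs : Rabs k * Rabs k = k ^ 2) by (rewrite <- Rabs_mult, Rabs_right; [ring| apply Rle_ge; nra]).
  assert (Hs1 : 1 <= s) by nra.
  assert (Hka : Rabs k <= s) by nra.
  assert (Hu : s <= 1 + Rabs k) by nra.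
  assert (Hl : 1 + Rabs k <= 2 * s) by nra.
  split; [|split].
  - apply Rinv_le_contravar; lra.
  - unfold Rdiv. apply Rmult_le_reg_l with s; [lra|]. rewrite Rinv_r by lra.
    apply Rmult_le_reg_r with (1 + Rabs k); [lra|].
    rewrite Rmult_1_l, Rmult_assoc, (Rmult_assoc 2), Rinv_l by lra. lra.
  - apply Rinv_0_lt_compat; lra.
Qed.

Theorem proposition3 (b : R) (f : R -> R)
  (hb : 0 < b)
  (hanalytic : real_analytic_on 0 b f)
  (hnonzero : exists x, 0 < x < b /\ f x <> 0)
  (* (1a) kappa(f,x) -> +oo as x -> b *)
  (h1b : forall M : R, exists delta, 0 < delta /\
           forall x, b - delta < x < b -> Rbar_le (Finite M) (kappa f x))
  (* (1b) along sequences x_j -> 0 with dist(x_j, I) -> 0, kappa -> +oo *)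
  (h10 : forall u : nat -> R,
           (forall j, 0 < u j < b) ->
           is_lim_seq u 0 ->
           (forall eps, 0 < eps -> exists N, forall j, (N <= j)%nat ->
              Rbar_lt (reldist_set (u j) (fun s => 0 < s < b /\ f s = 0))
                      (Finite eps)) ->
           forall M : R, exists N, forall j, (N <= j)%nat ->
              Rbar_le (Finite M) (kappa f (u j)))
  (* (2) limsup |H(f,x)| <= C both as x -> 0+ and as x -> b- *)
  (h2 : exists C, 0 < C /\
          (forall eps, 0 < eps -> exists delta, 0 < delta /\
             forall x, 0 < x < b -> x < delta -> Rabs (Hf f x) <= C + eps) /\
          (forall eps, 0 < eps -> exists delta, 0 < delta /\
             forall x, 0 < x < b -> b - delta < x -> Rabs (Hf f x) <= C + eps)) :
  amenable_on_interval b f.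
Proof.
  destruct (H_global b f hanalytic hb h2) as [K [HK0 HK]].
  pose proof (f_derivs b f hanalytic) as Hder.
  set (L := 2 + K).
  assert (HL : 0 < L) by (unfold L; lra).
  set (F := fun t => f (exp t)).
  set (dF := fun t => exp t * Derive f (exp t)).
  set (W := fun t => ww f (exp t)).
  assert (HFd : forall t, exp t < b -> is_derive F t (dF t)).
  { intros t Ht. destruct (Hder (exp t) (conj (exp_pos t) Ht)) as [D1 _].
    pose proof (is_derive_comp f exp t _ _ D1 (is_derive_exp t)) as H.
    eapply is_derive_ext; [intros; reflexivity|]. exact H. }
  assert (HFc : forall t, exp t < b -> continuity_pt F t).
  { intros t Ht. eapply deriv_cont; apply HFd; auto. }
  assert (HWle : forall t, F t <> 0 -> W t * Rabs (dF t) <= Rabs (F t)).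
  { intros t Ft. exact (ww_le f (exp t) Ft). }
  assert (HLip : forall t1 t2, t1 <= t2 -> (forall t, t1 <= t <= t2 -> exp t < b /\ F t <> 0) ->
     W t1 - L * (t2 - t1) <= W t2 /\ W t2 - L * (t2 - t1) <= W t1).
  { intros t1 t2 H12 Ht. pose proof (W_lip f b K t1 t2 Hder HK H12 Ht) as H.
    apply Rabs_le_between in H. unfold W, L. lra. }
  exists (2 * L + 4). split; [lra|].
  intros x k Hx Hkap m.
  unfold kappa in Hkap.
  destruct (Req_EM_T x 0) as [Hx0|Hx0]; [lra|].
  destruct (Req_EM_T (f x) 0) as [Fx0|Fx]; [discriminate|].
  injection Hkap as Hk.
  assert (Hkk : k = Rabs (kk f x)).
  { rewrite <- Hk. unfold kk. unfold Rdiv. rewrite !Rabs_mult, Rabs_inv. auto. }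
  destruct (ww_bounds f x Fx) as [Hw1 [Hw2 Hw0]].
  rewrite <- Hkk in Hw1, Hw2.
  set (wx := ww f x) in *.
  assert (Hk0 : 0 <= k) by (rewrite Hkk; apply Rabs_pos).
  assert (Hm : 1 <= m) by (unfold m; lra).
  set (C := 2 * L + 4) in *.
  assert (HC : 0 < C) by (unfold C; lra).
  assert (Hmw : 1 / (C * m) <= wx / C).
  { unfold Rdiv. rewrite Rinv_mult, Rmult_1_l, Rmult_comm. apply Rmult_le_compat_r.
    - left; apply Rinv_0_lt_compat; auto.
    - exact Hw1. }
  assert (HLw : L * (wx / C) <= wx / 2).
  { unfold Rdiv. apply Rmult_le_reg_r with C; auto.
    rewrite Rmult_assoc, Rmult_assoc, Rinv_l, Rmult_1_r by lra. unfold C. nra. }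
  set (tx := ln x).
  assert (Wtx : W tx = wx) by (unfold W, tx; rewrite exp_ln by lra; reflexivity).
  assert (Hclaim : forall y, Rbar_lt (reldist y x) (Finite (1 / (C * m))) ->
            0 < y < b /\ f y <> 0 /\ wx / 2 <= ww f y).
  { intros y Hy. unfold reldist in Hy.
    destruct (Req_EM_T y 0) as [Hy0|Hy0].
    { destruct (Req_EM_T x 0); [lra|]. simpl in Hy. contradiction. }
    destruct (Rlt_dec 0 (y * x)) as [Hyx|Hyx]; [|simpl in Hy; contradiction].
    simpl in Hy.
    assert (Hypos : 0 < y) by nra.
    set (ty := ln y).
    assert (Hyt : exp ty = y) by (unfold ty; rewrite exp_ln; auto).
    assert (Hxt : exp tx = x) by (unfold tx; rewrite exp_ln; lra).
    assert (Hd : Rabs (ty - tx) < wx / C).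
    { unfold ty, tx. rewrite ln_div in Hy by lra. rewrite <- Rabs_Ropp.
      replace (- (ln y - ln x)) with (ln x - ln y) by ring. lra. }
    assert (Wty : W ty = ww f y) by (unfold W; rewrite Hyt; reflexivity).
    assert (Hexpm : forall s t, s <= t -> exp s <= exp t).
    { intros s t Hst. destruct Hst as [Hst|Hst]; [left; apply exp_increasing; auto|right; rewrite Hst; auto]. }
    assert (Hxb : exp tx < b) by lra.
    destruct (Rle_dec tx ty) as [Hle|Hlt].
    - assert (Hdist : L * (ty - tx) < wx / 2).
      { rewrite Rabs_right in Hd by lra.
        apply Rlt_le_trans with (L * (wx / C)); [|lra].
        apply Rmult_lt_compat_l; auto. }
      assert (Hnz : forall t, tx <= t <= ty -> exp t < b -> F t <> 0).
      { intros t0 Ht0 Hb0 F0.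
        assert (Htx0 : tx < t0).
        { destruct (Rle_lt_or_eq_dec tx t0 (proj1 Ht0)) as [|E]; auto. exfalso. apply Fx.
          rewrite <- Hxt, E. exact F0. }
        destruct (nearest_zero_right F t0 tx Htx0 F0) as [z [Hz [Fz Hnz]]].
        { unfold F; rewrite Hxt; auto. }
        { intros s Hs. apply HFc. apply Rle_lt_trans with (exp t0); auto. apply Hexpm; lra. }
        assert (Hzb : exp z < b) by (apply Rle_lt_trans with (exp t0); auto; apply Hexpm; lra).
        assert (HZ : W tx <= L * (z - tx)).
        { apply (zero_bound_right F dF W z tx L).
          - lra.
          - lra.
          - exact Fz.
          - apply HFc; auto.
          - intros s Hs. split; [apply Hnz; lra|]. apply HFd.
            apply Rle_lt_trans with (exp z); auto. apply Hexpm; lra.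
          - intros s Hs. apply HWle. apply Hnz; lra.
          - intros s Hs. apply (HLip tx s); [lra|]. intros t Ht. split.
            + apply Rle_lt_trans with (exp z); auto. apply Hexpm; lra.
            + apply Hnz; lra. }
        assert (L * (z - tx) <= L * (ty - tx)) by (apply Rmult_le_compat_l; lra).
        lra. }
      assert (Hyb : y < b).
      { destruct (Rlt_dec y b) as [|Hyb]; auto. exfalso.
        destruct (h1b (4 / wx)) as [d1 [Hd1 Hd1']].
        set (x1 := Rmax x (b - d1 / 2)).
        assert (Hx1 : x <= x1 /\ b - d1 < x1 < b).
        { unfold x1. split; [apply Rmax_l|]. split.
          - apply Rlt_le_trans with (b - d1 / 2); [lra|apply Rmax_r].
          - apply Rmax_lub_lt; lra. }
        set (s1 := ln x1).
        assert (Hs1e : exp s1 = x1) by (unfold s1; rewrite exp_ln; lra).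
        assert (Hs1 : tx <= s1 <= ty).
        { unfold tx, s1, ty. split; apply ln_le; lra. }
        assert (Fs1 : f x1 <> 0).
        { pose proof (Hnz s1 Hs1 ltac:(lra)) as HH. unfold F in HH. rewrite Hs1e in HH. auto. }
        specialize (Hd1' x1 (proj2 Hx1)). unfold kappa in Hd1'.
        destruct (Req_EM_T x1 0); [lra|]. destruct (Req_EM_T (f x1) 0); [contradiction|].
        simpl in Hd1'.
        assert (Ha : 4 / wx <= Rabs (kk f x1)).
        { unfold kk, Rdiv. rewrite !Rabs_mult, Rabs_inv. exact Hd1'. }
        destruct (ww_bounds f x1 Fs1) as [_ [Hb1 _]].
        set (a := Rabs (kk f x1)) in *.
        assert (Hwa : 4 <= wx * a).
        { replace 4 with (wx * (4 / wx)) by (field; lra). apply Rmult_le_compat_l; lra. }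
        assert (H2a : 2 / (1 + a) < wx / 2).
        { assert (0 <= a) by (unfold a; apply Rabs_pos).
          apply Rmult_lt_reg_r with (1 + a); [lra|]. unfold Rdiv.
          rewrite Rmult_assoc, Rinv_l by lra. nra. }
        destruct (HLip tx s1 (proj1 Hs1)) as [HL1 _].
        { intros t Ht. split.
          - apply Rle_lt_trans with (exp s1); [apply Hexpm; lra| lra].
          - apply Hnz; [lra|]. apply Rle_lt_trans with (exp s1); [apply Hexpm; lra| lra]. }
        assert (L * (s1 - tx) <= L * (ty - tx)) by (apply Rmult_le_compat_l; lra).
        unfold W in HL1. rewrite Hs1e in HL1. fold (W tx) in HL1. lra. }
      assert (Hall : forall t, tx <= t <= ty -> exp t < b /\ F t <> 0).
      { intros t Ht. assert (exp t < b) by (apply Rle_lt_trans with (exp ty); [apply Hexpm; lra|lra]).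
        split; auto. }
      destruct (HLip tx ty Hle Hall) as [HL1 _].
      destruct (Hall ty ltac:(lra)) as [_ Fy]. unfold F in Fy. rewrite Hyt in Fy.
      split; [lra|split; auto]. lra.
    - assert (Hdist : L * (tx - ty) < wx / 2).
      { rewrite Rabs_left in Hd by lra.
        apply Rlt_le_trans with (L * (wx / C)); [|lra].
        apply Rmult_lt_compat_l; lra. }
      assert (Hbb : forall t, t <= tx -> exp t < b) by (intros t Ht; apply Rle_lt_trans with (exp tx); auto).
      assert (Hnz : forall t, ty <= t <= tx -> F t <> 0).
      { intros t0 Ht0 F0.
        assert (Htx0 : t0 < tx).
        { destruct (Rle_lt_or_eq_dec t0 tx (proj2 Ht0)) as [|E]; auto. exfalso. apply Fx.
          rewrite <- Hxt, <- E. exact F0. }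
        destruct (nearest_zero_left F t0 tx Htx0 F0) as [z [Hz [Fz Hnz]]].
        { unfold F; rewrite Hxt; auto. }
        { intros s Hs. apply HFc. apply Hbb; lra. }
        assert (HZ : W tx <= L * (tx - z)).
        { apply (zero_bound F dF W z tx L).
          - lra.
          - lra.
          - exact Fz.
          - apply HFc, Hbb; lra.
          - intros s Hs. split; [apply Hnz; lra|]. apply HFd, Hbb; lra.
          - intros s Hs. apply HWle. apply Hnz; lra.
          - intros s Hs. apply (HLip s tx); [lra|]. intros t Ht. split.
            + apply Hbb; lra.
            + apply Hnz; lra. }
        assert (L * (tx - z) <= L * (tx - ty)) by (apply Rmult_le_compat_l; lra).
        lra. }
      assert (Hall : forall t, ty <= t <= tx -> exp t < b /\ F t <> 0).
      { intros t Ht. split; [apply Hbb; lra| apply Hnz; lra]. }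
      destruct (HLip ty tx ltac:(lra) Hall) as [_ HL1].
      destruct (Hall ty ltac:(lra)) as [Hyb Fy]. unfold F in Fy. rewrite Hyt in Fy. rewrite Hyt in Hyb.
      split; [lra|split; auto]. lra. }
  split.
  - intros y Hy. apply Hclaim; auto.
  - intros y Hy. destruct (Hclaim y Hy) as [[Hy0 Hyb] [Fy Hwy]].
    unfold mu, kappa.
    destruct (Req_EM_T y 0); [lra|]. destruct (Req_EM_T (f y) 0); [contradiction|].
    simpl.
    replace (Rabs y * Rabs (Derive f y) / Rabs (f y)) with (Rabs (kk f y))
      by (unfold kk, Rdiv; rewrite !Rabs_mult, Rabs_inv; auto).
    destruct (ww_bounds f y Fy) as [_ [Hb1 Hpos]].
    set (r := Rabs (kk f y)) in *.
    assert (0 <= r) by (unfold r; apply Rabs_pos).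
    assert (Hr : (1 + r) * ww f y <= 2).
    { apply Rmult_le_reg_r with (/ (1 + r)). { apply Rinv_0_lt_compat; lra. }
      rewrite Rmult_comm, <- Rmult_assoc, Rinv_l, Rmult_1_l by lra. exact Hb1. }
    assert (Hwm : 1 <= wx * m).
    { assert (Hmd : m = 1 + k) by reflexivity.
      assert (Hinv : / m * m = 1) by (rewrite Hmd; field; lra).
      assert (/ m <= wx) by (rewrite Hmd; exact Hw1).
      rewrite <- Hinv. apply Rmult_le_compat_r; lra. }
    assert (H1 : (1 + r) * wx <= 4).
    { assert ((1 + r) * (wx / 2) <= (1 + r) * ww f y) by (apply Rmult_le_compat_l; lra). lra. }
    assert (H2 : 1 + r <= 4 * m).
    { apply Rle_trans with ((1 + r) * (wx * m)).
      - rewrite <- (Rmult_1_r (1 + r)) at 1. apply Rmult_le_compat_l; lra.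
      - rewrite <- Rmult_assoc. apply Rmult_le_compat_r; lra. }
    assert (4 * m <= C * m) by (apply Rmult_le_compat_r; unfold C; lra).
    lra.
Qed.
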